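(* Let $n\ge2$ and let $\phi:\mathbb{R}^n\setminus\{0\}\to\mathbb{C}$ be continuous, homogeneous and even. Assume that for every $1\le k\le n-1$, \[ \operatorname{supp}(\phi)\cap\{\xi\in\mathbb{R}^n\setminus\{0\}:\xi_k=0\}=\emptyset. \] Then the function $\psi:\mathbb{R}^{n-1}\to\mathbb{C}$, $\psi(s_1,\dots,s_{n-1})=\phi(1,s_1,s_1s_2,\dots,s_1s_2\cdots s_{n-1})$, is continuous and compactly supported, and for every $\xi\in\mathbb{R}^n$ with $\xi_k\ne0$ for all $1\le k\le n-1$ we have \[ \phi(\xi_1,\dots,\xi_n)=\psi\Big(\frac{\xi_2}{\xi_1},\frac{\xi_3}{\xi_2},\dots,\frac{\xi_n}{\xi_{n-1}}\Big). \]
   Context: A function $\phi:\mathbb{R}^n\setminus\{0\}\to\mathbb{C}$ is homogeneous if $\phi(\mu\xi)=\phi(\xi)$ for all $\mu>0$, and even if $\phi(-\xi)=\phi(\xi)$. The support $\operatorname{supp}(\phi)$ is the closure, in $\mathbb{R}^n\setminus\{0\}$, of $\{\xi\in\mathbb{R}^n\setminus\{0\}:\phi(\xi)\ne0\}$. *)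

(* Defs.v *)
From HB Require Import structures.
From mathcomp Require Import all_boot all_order all_algebra.
From mathcomp Require Import all_classical all_reals all_analysis.
From mathcomp Require Export complex.
Export numFieldTopology.Exports numFieldNormedType.Exports.
Import Order.TTheory GRing.Theory Num.Theory.


Local Open Scope ring_scope.
Local Open Scope classical_set_scope.
Local Open Scope complex_scope.

(* The complex numbers R[i] carry the topology induced by their norm
   (the modulus), i.e. the usual topology of C. *)
#[export] HB.instance Definition _ (R : rcfType) :=
  PseudoPointedMetric.copy (R[i]) (R[i])^o.

Section Defs.
Variable R : realType.

Definition punctured (n : nat) : set 'rV[R]_n := [set x | x != 0].

(* 0-based coordinate access by a natural number (0 outside the range). *)
Definition vcoord (n : nat) (x : 'rV[R]_n) (k : nat) : R :=
  match @insub nat (fun k => (k < n)%N) 'I_n k with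
  | Some i => x 0 i
  | None => 0
  end.

Definition homogeneous (n : nat) (phi : 'rV[R]_n -> R[i]) : Prop :=
  forall (mu : R) (xi : 'rV[R]_n), 0 < mu -> xi != 0 -> phi (mu *: xi) = phi xi.

Definition even_fun (n : nat) (phi : 'rV[R]_n -> R[i]) : Prop :=
  forall xi : 'rV[R]_n, xi != 0 -> phi (- xi) = phi xi.

(* supp phi: closure, inside R^n \ {0}, of {xi != 0 | phi xi != 0}
   (relative closure = ambient closure intersected with R^n \ {0}). *)
Definition supp (n : nat) (phi : 'rV[R]_n -> R[i]) : set 'rV[R]_n :=
  punctured n `&` closure [set xi | xi != 0 /\ phi xi != 0].

(* psi(s_1,...,s_{n-1}) = phi(1, s_1, s_1 s_2, ..., s_1 ... s_{n-1}):
   coordinate j (0-based) is the product of s_i over i < j. *)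
Definition psi_of (n : nat) (phi : 'rV[R]_n -> R[i]) : 'rV[R]_n.-1 -> R[i] :=
  fun s => phi (\row_(j < n) \prod_(i < n.-1 | (i < j)%N) s 0 i).

(* (xi_2/xi_1, ..., xi_n/xi_{n-1}) in 0-based indexing *)
Definition ratios (n : nat) (xi : 'rV[R]_n) : 'rV[R]_n.-1 :=
  \row_(i < n.-1) (vcoord n xi i.+1 / vcoord n xi i).

End Defs.

Arguments punctured {R} n.
Arguments vcoord {R n} x k.
Arguments homogeneous {R n} phi.
Arguments even_fun {R n} phi.
Arguments supp {R n} phi.
Arguments psi_of {R n} phi s.
Arguments ratios {R n} xi.

(* Main.v *)
Require Import Defs.
From HB Require Import structures.
From mathcomp Require Import all_boot all_order all_algebra.
From mathcomp Require Import all_classical all_reals all_analysis.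
From mathcomp Require Import complex.
Import numFieldTopology.Exports numFieldNormedType.Exports.
Import Order.TTheory GRing.Theory Num.Theory.
Local Open Scope ring_scope.
Local Open Scope classical_set_scope.
Local Open Scope complex_scope.

Section Helpers.
Variable R : realType.

Lemma vcoordE n (x : 'rV[R]_n) (i : 'I_n) : vcoord x i = x 0 i.
Proof.
rewrite /vcoord; case: insubP => [j _ /= ji|]; last by rewrite ltn_ord.
by congr (x 0 _); apply: val_inj.
Qed.

Lemma prodS m (s : 'I_m -> R) (j : 'I_m) :
  \prod_(i < m | (i < j.+1)%N) s i = (\prod_(i < m | (i < j)%N) s i) * s j.
Proof.
rewrite (bigD1 j) //= mulrC; congr (_ * _); apply: eq_bigl => i.
by rewrite ltnS ltn_neqAle andbC.
Qed.

Lemma cont_prod (T : topologicalType) (I : Type) (r : seq I) (P : pred I)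
  (f : I -> T -> R) : (forall i, continuous (f i)) ->
  continuous (fun x => \prod_(i <- r | P i) f i x).
Proof.
move=> fc; elim: r => [|a r IH].
  by under eq_fun do rewrite big_nil; exact: cst_continuous.
case Pa: (P a).
  under eq_fun do rewrite big_cons Pa.
  by move=> x; apply: continuousM; [exact: fc | exact: IH].
by under eq_fun do rewrite big_cons Pa.
Qed.

Lemma entry_le_norm m n (x : 'M[R]_(m, n)) i j : `|x i j| <= `|x|.
Proof.
change (`|x i j| <= mx_norm x); rewrite mx_normrE; apply/bigmax_geP; right => /=.
by exists (i, j).
Qed.

End Helpers.
Arguments vcoordE {R n}.
Arguments prodS {R m}.
Arguments cont_prod {R T I}.
Arguments entry_le_norm {R m n}.

Theorem proposition4p2 (R : realType) (n : nat) (phi : 'rV[R]_n -> R[i]) :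
  (2 <= n)%N ->
  {within punctured n, continuous phi} ->
  homogeneous phi ->
  even_fun phi ->
  (forall k : nat, (k < n.-1)%N ->
     supp phi `&` [set xi | vcoord xi k = 0] = set0) ->
  [/\ continuous (psi_of phi),
      compact (closure [set s | psi_of phi s != 0]) &
      forall xi : 'rV[R]_n,
        (forall k : nat, (k < n.-1)%N -> vcoord xi k != 0) ->
        phi xi = psi_of phi (ratios xi)].
Proof.
case: n phi => [|[|m]] // phi _ phic hom ev hsupp.
pose V := fun s : 'rV[R]_(m.+1) => \row_(j < m.+2) \prod_(i < m.+1 | (i < j)%N) s 0 i.
have psiE : forall s, psi_of phi s = phi (V s) by [].
have V00 : forall s, V s 0 0 = 1.
  by move=> s; rewrite mxE big_pred0 // => i; rewrite ltn0.
have VA : forall s, V s != 0.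
  move=> s; apply/eqP => /matrixP/(_ 0 0); rewrite V00 mxE => /eqP.
  by rewrite oner_eq0.
split.
- have Vc : continuous V.
    move=> s; apply/(@cvg_ballP _ _ _ (nbhs s)) => e e0.
    have : \forall x \near s, forall j : 'I_m.+2, ball (V s 0 j) e (V x 0 j).
      apply: (@filter_forall _ _ _ (nbhs s)) => j.
      have cj : continuous (fun x : 'rV[R]_(m.+1) => V x 0 j).
        rewrite /V; under eq_fun do rewrite mxE.
        by apply: cont_prod => i; exact: coord_continuous.
      exact: (@cvg_ballP _ _ _ (nbhs s) _ _ _).1 (cj s) e e0.
    apply: filterS => x hx; split => // i j; rewrite (ord1 i); exact: hx.
  have phiw := (subspace_continuousP _ _).1 phic.
  move=> s.
  have VW : V @ s --> within (punctured m.+2) (nbhs (V s)).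
    move=> P HP; have h := Vc s (fun y => punctured m.+2 y -> P y) HP.
    exact: (@filterS _ (nbhs s) _ (fun x => punctured m.+2 (V x) -> P (V x)) _
      (fun x hx => hx (VA x)) h).
  exact: (cvg_comp _ _ VW (phiw _ (VA s))).
- pose E := [set xi : 'rV[R]_(m.+2) | xi != 0 /\ phi xi != 0].
  pose K := closure E `&` [set w : 'rV[R]_(m.+2) | `|w| = 1].
  have Kc : compact K.
    apply: bounded_closed_compact.
      rewrite /bounded_near.
      apply: (filterS _ (nbhs_pinfty_ge (@real1 R))) => M M1 w [_ w1].
      by rewrite /= w1.
    apply: closedI; first exact: closed_closure.
    apply: (@preimage_closed _ _ (fun w : 'rV[R]_(m.+2) => `|w|) [set x : R | x = 1]).
      by move=> x _; exact: norm_continuous.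
    exact: closed_eq.
  have hdelta : forall k : 'I_m.+1, exists d : R,
      0 < d /\ forall w, K w -> d <= `|w 0 (widen_ord (leqnSn _) k)|.
    move=> k; set kk := widen_ord _ k.
    pose C := (fun w : 'rV[R]_(m.+2) => w 0 kk) @` K.
    have Cc : closed C.
      apply: compact_closed; first exact: norm_hausdorff.
      apply: continuous_compact => //.
      apply: continuous_subspaceT; exact: coord_continuous.
    have C0 : ~ C 0.
      move=> [w Kw w0].
      have : (supp phi `&` [set xi | vcoord xi k = 0]) w.
        split; last by move: (vcoordE w kk) => /= ->.
        split; last exact: Kw.1.
        apply/eqP => wz; move: Kw.2; rewrite /= wz normr0 => /eqP.
        by rewrite eq_sym oner_eq0.
      by rewrite hsupp.
    have : ~ closure C 0 by move/Cc.
    move=> /existsNP [B /not_implyP [nB nCB]].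
    have [e e0 he] := (nbhs_ballP _ _).1 nB.
    exists e; split => // w Kw; rewrite leNgt; apply/negP => lt.
    apply: nCB; exists (w 0 kk); split; first by exists w.
    apply: he; rewrite -ball_normE /ball_ /=.
    by rewrite distrC subr0.
  have [d hd] := boolp.choice hdelta.
  pose M := \sum_(k < m.+1) (d k)^-1.
  have bnd : forall s, psi_of phi s != 0 -> forall i, `|s 0 i| <= M.
    move=> s ps i.
    have [di hdK] := hd i.
    have stepM : (d i)^-1 <= M.
      rewrite /M (bigD1 i) //= lerDl; apply: sumr_ge0 => k _.
      by rewrite invr_ge0 ltW // (hd k).1.
    apply: le_trans stepM.
    have vn0 : V s != 0 := VA s.
    have c0 : 0 < `|V s| by rewrite normr_gt0.
    have Kw : K (`|V s|^-1 *: V s).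
      split.
        apply: subset_closure; split.
          by rewrite scaler_eq0 negb_or invr_eq0 (gt_eqF c0) vn0.
        by rewrite hom ?invr_gt0 // -psiE.
      by rewrite /= normrZ gtr0_norm ?invr_gt0 // mulVf // gt_eqF.
    have h1 := hdK _ Kw.
    rewrite mxE normrM gtr0_norm ?invr_gt0 // in h1.
    have h2 := entry_le_norm (V s) 0 (Ordinal (ltn_ord i : (i.+1 < m.+2)%N)).
    have h3 : V s 0 (Ordinal (ltn_ord i : (i.+1 < m.+2)%N)) =
        V s 0 (widen_ord (leqnSn _) i) * s 0 i.
      by rewrite !mxE; exact: (prodS (fun k => s 0 k) i).
    rewrite h3 normrM in h2.
    set a := `|V s 0 (widen_ord _ i)| in h1 h2.
    set c := `|V s| in h1 h2 c0.
    set t := `|s 0 i| in h2 *.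
    have t0 : 0 <= t := normr_ge0 _.
    have e1 : d i * t <= c^-1 * (a * t) by rewrite mulrA ler_wpM2r.
    have e2 : c^-1 * (a * t) <= c^-1 * c by rewrite ler_wpM2l // invr_ge0 ltW.
    rewrite mulVf ?gt_eqF // in e2.
    by rewrite -(ler_pM2l di) mulfV ?gt_eqF // (le_trans e1 e2).
  pose B := [set v : 'rV[R]_(m.+1) | forall i, (`[(- M), M]%classic : set R) (v ord0 i)].
  have Bc : compact B := rV_compact (T:=R) (n:=m.+1) (A:=fun=> `[(- M), M]%classic)
    (fun _ => @segment_compact R (- M) M).
  have Bcl : closed B := compact_closed (@norm_hausdorff _ _) Bc.
  apply: (subclosed_compact _ Bc); first exact: closed_closure.
  have SB : [set s | psi_of phi s != 0] `<=` B.
    move=> s ps j; rewrite /= in_itv /= -ler_norml; exact: bnd.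
  by move=> x /(closureS SB) /Bcl.
move=> xi hxi.
have x0 : vcoord xi 0 != 0 := hxi 0%N isT.
have c0 : vcoord xi 0 = xi 0 ord0 := vcoordE xi ord0.
have claim : forall j (hj : (j < m.+2)%N),
    \prod_(i < m.+1 | (i < j)%N) ratios xi 0 i = vcoord xi j / vcoord xi 0.
  elim=> [|j IH] hj.
    by rewrite big_pred0 ?divff // => i; rewrite ltn0.
  have hj' : (j < m.+1)%N by [].
  have := prodS (fun i => ratios xi 0 i) (Ordinal hj'); rewrite /= => ->.
  rewrite IH ?(ltnW hj) // mxE mulrC mulrA divfK //.
  exact: hxi.
have eqV : V (ratios xi) = (vcoord xi 0)^-1 *: xi.
  by apply/rowP => j; rewrite !mxE claim // vcoordE mulrC.
have xi0 : xi != 0.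
  apply: contra x0 => /eqP ->.
  by move: (vcoordE (0 : 'rV[R]_m.+2) ord0) => /= ->; rewrite mxE.
rewrite psiE eqV.
case: (ltrP 0 (vcoord xi 0)) => hc.
  by rewrite hom // invr_gt0.
have cn : vcoord xi 0 < 0 by rewrite lt_neqAle x0 hc.
have -> : (vcoord xi 0)^-1 *: xi = - ((- vcoord xi 0)^-1 *: xi).
  by rewrite invrN scaleNr opprK.
rewrite ev; last by rewrite scaler_eq0 negb_or invr_eq0 oppr_eq0 x0.
by rewrite hom // invr_gt0 oppr_gt0.
Qed.
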